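(* Let $1\le t_i\le t_o$ be integers and $q$ a prime power, and let $S(t_i,t_o,q)=\max\{s:\text{a linear }(t_i,t_o,s,q)\text{-AONT exists}\}$. Then there exists a $(t_i,t_o,s,q)$-AONT for every $s$ with $t_o\le s\le S(t_i,t_o,q)$.
   Context: A $(t_i,t_o,s,q)$-AONT is a $q^s\times 2s$ array over an alphabet of size $q$ (columns labelled $1,\dots,2s$) that is unbiased with respect to $\{1,\dots,s\}$, $\{s+1,\dots,2s\}$, and $I\cup J$ for every $I\subseteq\{1,\dots,s\}$ with $|I|=t_i$ and every $J\subseteq\{s+1,\dots,2s\}$ with $|J|=s-t_o$; here an $N\times k$ array is unbiased with respect to a set $D$ of columns if the rows restricted to $D$ contain every $|D|$-tuple over the alphabet exactly $N/q^{|D|}$ times. A linear $(t_i,t_o,s,q)$-AONT is the array with rows $(\mathbf{x},\mathbf{x}M^{-1})$, $\mathbf{x}\in\mathbb{F}_q^s$, for an invertible $s\times s$ matrix $M$ over $\mathbb{F}_q$, which is a $(t_i,t_o,s,q)$-AONT; equivalently $M$ is invertible and every $t_o\times t_i$ submatrix of $M$ has rank $t_i$. *)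

(* Defs.v *)
From HB Require Import structures.
From mathcomp Require Import all_boot all_order all_algebra all_field.
Set Implicit Arguments. Unset Strict Implicit. Unset Printing Implicit Defensive.
Import GRing.Theory.
Local Open Scope ring_scope.

(* unbiased with respect to the column set D: every |D|-tuple over X
   (given as the restriction to D of some f : 'I_k -> X) appears in
   the rows restricted to D exactly N / q^|D| times, N = #|R|. *)
Definition unbiased (R X : finType) (k : nat) (A : R -> 'I_k -> X)
    (D : {set 'I_k}) : Prop :=
  forall f : {ffun 'I_k -> X},
    #|[set r : R | [forall j in D, A r j == f j]]| = (#|R| %/ #|X| ^ #|D|)%N.

(* (ti,to,s,q)-AONT: a q^s x 2s array (columns 0..2s-1 here, i.e. the
   paper's columns 1..2s shifted by one) over an alphabet of size q. *)
Definition aont (R X : finType) (ti to s : nat) (A : R -> 'I_(s + s) -> X)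
    : Prop :=
  let first := [set j : 'I_(s + s) | (j < s)%N] in
  let second := [set j : 'I_(s + s) | (s <= j)%N] in
  [/\ #|R| = (#|X| ^ s)%N,
      unbiased A first,
      unbiased A second &
      forall I J : {set 'I_(s + s)},
        I \subset first -> #|I| = ti ->
        J \subset second -> #|J| = (s - to)%N ->
        unbiased A (I :|: J)].

Definition linear_array (F : finFieldType) (s : nat) (M : 'M[F]_s)
    (x : 'rV[F]_s) (j : 'I_(s + s)) : F :=
  match split j with
  | inl a => x 0 a
  | inr b => (x *m invmx M) 0 b
  end.

Definition linear_aont (F : finFieldType) (ti to s : nat) (M : 'M[F]_s)
    : Prop :=
  M \in unitmx /\ aont ti to (linear_array M).

(* Main.v *)
Require Import Defs.
From HB Require Import structures.
From mathcomp Require Import all_boot all_order all_algebra all_field.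
From mathcomp Require Import zify.
Set Implicit Arguments. Unset Strict Implicit. Unset Printing Implicit Defensive.
Import GRing.Theory.
Local Open Scope ring_scope.

Lemma fiber_count (F : finFieldType) n k (L : 'M[F]_(n,k)) (D : {set 'I_k}) :
 (forall f : {ffun 'I_k -> F}, exists x : 'rV_n, forall j, j \in D -> (x *m L) 0 j = f j) ->
 forall f : {ffun 'I_k -> F},
 #|[set x : 'rV[F]_n | [forall j in D, (x *m L) 0 j == f j]]| = (#|F|^n %/ #|F|^#|D|)%N.
Proof.
move=> surj.
pose S (f : {ffun 'I_k -> F}) := [set x : 'rV[F]_n | [forall j in D, (x *m L) 0 j == f j]].
pose f0 : {ffun 'I_k -> F} := [ffun=> 0].
have Hc : forall f, #|S f| = #|S f0|.
  move=> f; have [x0 Hx0] := surj f.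
  rewrite -(card_preimset (S f0) (addIr (- x0))); apply: eq_card => x.
  rewrite !inE; apply: eq_forallb_in => j jD.
  rewrite ffunE mulmxBl -(Hx0 j jD); move: (x *m L) (x0 *m L) => u v.
  by rewrite !mxE subr_eq0.
have q0 : (0 < #|F|)%N by apply/card_gt0P; exists 0.
pose key (x : 'rV[F]_n) : {ffun 'I_k -> F} := [ffun j => if j \in D then (x *m L) 0 j else 0].
have Htot : (#|F|^n = #|F|^#|D| * #|S f0|)%N.
  have -> : (#|F| ^ n = #|{: 'rV[F]_n}|)%N by rewrite card_mx mul1n.
  rewrite -[in LHS]sum1_card (partition_big key (fun g => g \in pffun_on (0:F) D predT)); last first.
    move=> x _; apply/pffun_onP; split.
      by apply/subsetP => j; rewrite !inE ffunE; case: (j \in D) => //; rewrite eqxx.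
    by move=> y _.
  rewrite -(card_pffun_on (0:F) D predT) -sum_nat_const.
  apply: eq_bigr => g /pffun_onP [sg _].
  have E : forall x, (key x == g) = [forall j in D, (x *m L) 0 j == g j].
    move=> x; apply/eqP/forall_inP => [Hk j jD | H]; first by rewrite -Hk ffunE jD.
    apply/ffunP => j; rewrite ffunE; case: ifP => jD; first by apply/eqP/H.
    have : j \notin D by rewrite jD.
    apply: contraNeq => gj; apply: (subsetP sg); by rewrite inE eq_sym.
  rewrite -(Hc g) sum1_card; apply: eq_card => x; rewrite in_set -E; by [].
move=> f; rewrite -/(S f) Hc Htot mulKn // expn_gt0 q0 orTb.
by [].
Qed.

Lemma unbiased_ex (R X : finType) k (A : R -> 'I_k -> X) (D : {set 'I_k}) n :
  (0 < #|X|)%N -> #|R| = (#|X|^n)%N -> (#|D| <= n)%N -> unbiased A D ->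
  forall f : {ffun 'I_k -> X}, exists r, forall j, j \in D -> A r j = f j.
Proof.
move=> q0 HR HD U f.
have : (0 < #|[set r : R | [forall j in D, A r j == f j]]|)%N.
  by rewrite U HR divn_gt0 ?expn_gt0 ?q0 // leq_pexp2l.
case/card_gt0P => r; rewrite inE => /forall_inP H; exists r => j jD; exact/eqP/H.
Qed.

Lemma lin_unbiased (F : finFieldType) n k (R : finType) (A : R -> 'I_k -> F)
  (e : 'rV[F]_n -> R) (L : 'M[F]_(n,k)) (D : {set 'I_k}) :
  bijective e -> #|R| = (#|F|^n)%N -> (forall x j, A (e x) j = (x *m L) 0 j) ->
  (forall f : {ffun 'I_k -> F}, exists x : 'rV_n, forall j, j \in D -> (x *m L) 0 j = f j) ->
  unbiased A D.
Proof.
move=> [e' ee' e'e] HR HA surj f; rewrite HR -(fiber_count surj f).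
have -> : [set r | [forall j in D, A r j == f j]] =
          e @: [set x : 'rV_n | [forall j in D, (x *m L) 0 j == f j]].
  apply/setP => r; rewrite -[r in LHS]e'e -[r in RHS]e'e mem_imset; last exact: can_inj ee'.
  by rewrite !inE; apply: eq_forallb_in => j _; rewrite HA.
by rewrite card_imset //; exact: can_inj ee'.
Qed.

Lemma la_l (F : finFieldType) s (M : 'M[F]_s) x a :
  linear_array M x (lshift s a) = x 0 a.
Proof. by rewrite /linear_array (unsplitK (inl _ a)). Qed.

Lemma la_r (F : finFieldType) s (M : 'M[F]_s) x b :
  linear_array M x (rshift s b) = (x *m invmx M) 0 b.
Proof. by rewrite /linear_array (unsplitK (inr _ b)). Qed.

Lemma split_cases m n (j : 'I_(m+n)) :
  (exists a, j = lshift n a) \/ (exists b, j = rshift m b).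
Proof. by case: (split_ordP j) => [a|b] ->; [left|right]; eexists. Qed.

Lemma rowL (F : finFieldType) s (N : 'M[F]_s) (y : 'rV_s) a :
  (y *m row_mx N 1%:M) 0 (lshift s a) = (y *m N) 0 a.
Proof. by rewrite mul_mx_row row_mxEl. Qed.

Lemma rowR (F : finFieldType) s (N : 'M[F]_s) (y : 'rV_s) b :
  (y *m row_mx N 1%:M) 0 (rshift s b) = y 0 b.
Proof. by rewrite mul_mx_row row_mxEr mulmx1. Qed.
Theorem mainTheorem18 (F : finFieldType) (ti to s : nat) :
  (1 <= ti)%N -> (ti <= to)%N -> (to <= s)%N ->
  (exists (s' : nat) (M : 'M[F]_s'), (s <= s')%N /\ linear_aont ti to M) ->
  exists A : 'I_(#|F| ^ s) -> 'I_(s + s) -> F, aont ti to A.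
Proof.
move=> h1 h2 h3 [s' [M [hss' [Mu HA']]]].
case: HA' => HR' _ _ U3.
have q0 : (0 < #|F|)%N by apply/card_gt0P; exists 0.
pose t := widen_ord hss'.
have tinj : injective t by move=> i j /(congr1 val) /= /val_inj.
pose B := (rowsub t M)^T.
have rB : row_full B.
  rewrite /row_full mxrank_tr.
  have -> : rowsub t M = pid_mx s *m M.
    apply/matrixP => i j; rewrite [RHS]mxE (bigD1 (t i)) //= big1 ?addr0 => [|k ktk];
      rewrite !mxE /=.
      by rewrite eqxx ltn_ord mul1r.
    case: eqP => [ik|]; last by rewrite mul0r.
    have : val k = val (t i) by rewrite /= ik.
    by move/val_inj => kt; rewrite kt eqxx in ktk.
  by rewrite mxrankMfree ?row_free_unit // rank_pid_mx.
pose p := fullrankfun rB.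
have pinj : injective p := @fullrankfun_inj _ _ _ _ rB.
pose N := colsub p (rowsub t M).
have Nu : N \in unitmx.
  have -> : N = (rowsub p B)^T by apply/matrixP => i j; rewrite !mxE.
  by rewrite unitmx_tr fullrowsub_unit.
clearbody p.
have Hc : #|{: 'rV[F]_s}| = (#|F| ^ s)%N by rewrite card_mx mul1n.
pose L := row_mx N 1%:M.
pose e x := cast_ord Hc (enum_rank x).
exists (fun r j => (enum_val (cast_ord (esym Hc) r) *m L) 0 j).
have eb : bijective e.
  exists (fun r => enum_val (cast_ord (esym Hc) r)) => x.
    by rewrite /e cast_ordK enum_rankK.
  by rewrite /e enum_valK cast_ordKV.
have HA : forall x j, (enum_val (cast_ord (esym Hc) (e x)) *m L) 0 j = (x *m L) 0 j.
  by move=> x j; rewrite /e cast_ordK enum_rankK.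
have HR : #|'I_(#|F|^s)| = (#|F|^s)%N := card_ord _.
rewrite /aont; cbv zeta; split.
- exact: HR.
- apply: (lin_unbiased eb HR HA) => f.
  exists ((\row_a f (lshift s a)) *m invmx N) => j; rewrite inE => js.
  case: (split_cases j) => [[a ja]|[b jb]]; last by rewrite jb /= ltnNge leq_addr in js.
  by rewrite ja rowL mulmxKV // mxE.
- apply: (lin_unbiased eb HR HA) => f.
  exists (\row_b f (rshift s b)) => j; rewrite inE => js.
  case: (split_cases j) => [[a ja]|[b jb]]; first by rewrite ja /= leqNgt ltn_ord in js.
  by rewrite jb rowR mxE.
move=> I J sI cI sJ cJ; apply: (lin_unbiased eb HR HA) => f.
pose I0 := [set a : 'I_s | lshift s a \in I].
pose J0 := [set b : 'I_s | rshift s b \in J].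
have cI0 : #|I0| = ti.
  rewrite -cI -(card_imset _ (@lshift_inj s s)); apply: eq_card => j.
  case: (split_cases j) => [[a ->]|[b ->]].
    by rewrite mem_imset ?inE //; exact: lshift_inj.
  have -> : (rshift s b \in I) = false.
    by apply/negbTE/negP => /(subsetP sI); rewrite inE /= ltnNge leq_addr.
  by apply/negbTE/imsetP => -[a _ /eqP]; rewrite eq_rlshift.
have cJ0 : #|J0| = (s - to)%N.
  rewrite -cJ -(card_imset _ (@rshift_inj s s)); apply: eq_card => j.
  case: (split_cases j) => [[a ->]|[b ->]]; last first.
    by rewrite mem_imset ?inE //; exact: rshift_inj.
  have -> : (lshift s a \in J) = false.
    by apply/negbTE/negP => /(subsetP sJ); rewrite inE /= leqNgt ltn_ord.
  by apply/negbTE/imsetP => -[b _ /eqP]; rewrite eq_lrshift.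
pose I' := lshift s' @: (p @: I0).
pose Jt := t @: J0 :|: ~: (t @: setT).
pose J' := @rshift s' s' @: Jt.
have cI' : #|I'| = ti.
  rewrite card_imset; last exact: lshift_inj.
  by rewrite card_imset.
have cJ' : #|J'| = (s' - to)%N.
  rewrite card_imset; last exact: rshift_inj.
  have := cardsUI (t @: J0) (~: (t @: setT)).
  have -> : t @: J0 :&: ~: (t @: setT) = set0.
    apply/setP => k; rewrite !inE; apply/negbTE/andP.
    by case=> /imsetP [b _ ->]; rewrite imset_f ?in_setT.
  rewrite cards0 addn0 -/Jt => ->.
  have := cardsC (t @: setT); rewrite card_ord card_imset // cardsT card_ord => Hc'.
  rewrite card_imset // cJ0; lia.
have sI' : I' \subset [set j : 'I_(s' + s') | (j < s')%N].
  by apply/subsetP => j /imsetP [a _ ->]; rewrite inE /= ltn_ord.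
have sJ' : J' \subset [set j : 'I_(s' + s') | (s' <= j)%N].
  by apply/subsetP => j /imsetP [b _ ->]; rewrite inE /= leq_addr.
have UU := U3 I' J' sI' cI' sJ' cJ'.
have cU : (#|I' :|: J'| <= s')%N.
  apply: leq_trans (leq_card_setU I' J').1 _; rewrite cI' cJ'; lia.
pose f' : {ffun 'I_(s'+s') -> F} := [ffun j => match split j with
   | inl a => if [pick i | p i == a] is Some i then f (lshift s i) else 0
   | inr b => if [pick i | t i == b] is Some i then f (rshift s i) else 0 end].
have [x Hx] := unbiased_ex q0 HR' cU UU f'.
pose y' := x *m invmx M.
have y'M : y' *m M = x by rewrite mulmxKV.
have y'0 : forall b, b \notin t @: setT -> y' 0 b = 0.
  move=> b bn; have := Hx (rshift s' b); rewrite la_r ffunE (unsplitK (inr _ b)).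
  case: pickP => [i /eqP tib | _ ]; first by rewrite -tib imset_f ?in_setT in bn.
  apply; rewrite in_setU; apply/orP; right; rewrite mem_imset; last exact: rshift_inj.
  by rewrite in_setU in_setC bn orbT.
have y'J : forall b, b \in J0 -> y' 0 (t b) = f (rshift s b).
  move=> b bJ; have := Hx (rshift s' (t b)); rewrite la_r ffunE (unsplitK (inr _ (t b))).
  case: pickP => [i /eqP /tinj -> | H]; last by have := H b; rewrite eqxx.
  apply; rewrite in_setU; apply/orP; right; rewrite mem_imset; last exact: rshift_inj.
  by rewrite in_setU imset_f.
have xI : forall a, a \in I0 -> x 0 (p a) = f (lshift s a).
  move=> a aI; have := Hx (lshift s' (p a)); rewrite la_l ffunE (@unsplitK s' s' (inl _ (p a))).
  case: pickP => [i /eqP /pinj -> | H]; last by have := H a; rewrite eqxx.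
  apply; rewrite in_setU; apply/orP; left; rewrite mem_imset; last exact: lshift_inj.
  by rewrite imset_f.
clearbody y'.
pose y := \row_i y' 0 (t i).
have yN : forall a, (y *m N) 0 a = x 0 (p a).
  move=> a; rewrite -y'M [RHS]mxE [LHS]mxE.
  rewrite (bigID (fun k => k \in t @: setT)) /= [X in _ = _ + X]big1 ?addr0 => [|k kn];
    last by rewrite y'0 ?mul0r.
  rewrite big_imset /=; last by move=> i j _ _; exact: tinj.
  by apply: eq_big => [i|i _]; rewrite ?inE // /y /N !mxE.
exists y => j; rewrite in_setU => /orP [jI|jJ].
  case: (split_cases j) jI => [[a ->]|[b ->]] jI.
    by rewrite rowL yN xI // inE.
  by move/(subsetP sI): jI; rewrite inE /= ltnNge leq_addr.
case: (split_cases j) jJ => [[a ->]|[b ->]] jJ.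
  by move/(subsetP sJ): jJ; rewrite inE /= leqNgt ltn_ord.
by rewrite rowR mxE y'J // inE.
Qed.
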